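(* Let $X$ be an infinite h-homogeneous zero-dimensional compact Hausdorff space, $G=\mathrm{Homeo}(X)$, $k\ge1$ and $T\in\{1,-1\}^{S_k}$. Define $\phi_T:\Phi(X)\to\Omega_k$ by $\phi_T(c)(\beta)=T(\theta_\beta(c))$. Then $\phi_T$ is continuous and $G$-equivariant.
   Context: h-homogeneous: every nonempty clopen subset of $X$ is homeomorphic to $X$. $\Phi(X)\subset\mathrm{Exp}(\mathrm{Exp}(X))$ is the compact space of maximal chains of nonempty closed subsets of $X$ (Vietoris topologies), with $gc=\{gF:F\in c\}$. $\mathcal D_k$ is the set of ordered partitions $(B_1,\dots,B_k)$ of $X$ into $k$ nonempty clopen sets, with $G$ acting piecewise and $S_k$ acting by $\sigma(B_1,\dots,B_k)=(B_{\sigma(1)},\dots,B_{\sigma(k)})$. $\Omega_k=\{1,-1\}^{\mathcal D_k}$ with the product topology and $G$-action $(g\omega)(\beta)=\omega(g^{-1}\beta)$. For $c\in\Phi(X)$ and nonempty closed $D$, $D_c=\bigcap\{A\in c:A\cap D\ne\emptyset\}$; for $\beta\in\mathcal D_k$, $t^*_c(\beta)$ lists the pieces of $\beta$ in increasing order with respect to $B_i<_cB_j\iff (B_i)_c\subseteq(B_j)_c$, and $\theta_\beta(c)\in S_k$ is the unique permutation with $\theta_\beta(c)\beta=t^*_c(\beta)$. *)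

(* Defs.v *)
From HB Require Import structures.
From mathcomp Require Import all_boot all_order all_algebra all_fingroup.
From mathcomp Require Import all_classical all_reals all_analysis.

Set Implicit Arguments.
Unset Strict Implicit.
Unset Printing Implicit Defensive.

Import Order.TTheory GRing.Theory Num.Theory.
Local Open Scope classical_set_scope.

(* [vietoris T] is the power set of T endowed with the Vietoris topology,
   generated by the subbase {A | A `<=` U} and {A | A `&` U !=set0},
   U ranging over the open sets of T.  Restricted (as a subspace) to the
   nonempty closed sets this is the usual hyperspace Exp(T). *)
Definition vietoris (T : Type) := set T.

HB.instance Definition _ (T : Type) := Choice.on (vietoris T).

Definition vietoris_index (T : topologicalType) := (set T * bool)%type.

Definition vietoris_dom (T : topologicalType) : set (vietoris_index T) :=
  [set Ub | open Ub.1].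

Definition vietoris_subbase (T : topologicalType) (Ub : vietoris_index T)
  : set (vietoris T) :=
  if Ub.2 then [set A : set T | A `<=` Ub.1]
  else [set A : set T | A `&` Ub.1 !=set0].

HB.instance Definition _ (T : topologicalType) :=
  @isSubBaseTopological.Build (vietoris T) (vietoris_index T)
    (@vietoris_dom T) (@vietoris_subbase T).

Definition ExpSet (X : topologicalType) : set (set X) :=
  [set F | closed F /\ F !=set0].

Arguments ExpSet X : clear implicits.

Definition Exp (X : topologicalType) : topologicalType :=
  subspace (ExpSet X : set (vietoris X)).

(* the ambient space of Exp(Exp(X)): subsets of Exp(X) with the Vietoris
   topology built from the topology of Exp(X) *)
Definition ExpExp (X : topologicalType) : topologicalType := vietoris (Exp X).

Arguments Exp X : clear implicits.
Arguments ExpExp X : clear implicits.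

Definition is_chain (X : topologicalType) (c : set (set X)) :=
  c `<=` ExpSet X /\
  (forall A B, c A -> c B -> A `<=` B \/ B `<=` A).

Definition maximal_chain (X : topologicalType) (c : set (set X)) :=
  is_chain c /\ (forall c', is_chain c' -> c `<=` c' -> c' = c).

Definition Phi (X : topologicalType) : set (ExpExp X) :=
  [set c | maximal_chain (c : set (set X))].

Arguments Phi X : clear implicits.

Definition act_chain (X : Type) (g : X -> X) (c : set (set X)) : set (set X) :=
  [set g @` F | F in c].

Definition ordered_partition (X : topologicalType) (k : nat)
  (B : 'I_k -> set X) :=
  [/\ (forall i, clopen (B i) /\ B i !=set0),
      (forall i j, i != j -> B i `&` B j = set0) &
      \bigcup_i B i = [set: X]].

Definition Dk (X : topologicalType) (k : nat) : Type :=
  set_type (@ordered_partition X k).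

Arguments Dk X k : clear implicits.

(* piecewise action of a map g on D_k:  g (B_1,...,B_k) = (g B_1,...,g B_k)
   (insubd returns the argument unchanged when the image is not in D_k,
   which never happens for homeomorphisms g) *)
Definition act_D (X : topologicalType) (k : nat) (g : X -> X) (b : Dk X k)
  : Dk X k := insubd b (fun i => g @` (val b i)).

Definition perm_act (X : Type) (k : nat) (s : 'S_k) (B : 'I_k -> set X)
  : 'I_k -> set X := fun i => B (s i).

(* Omega_k = {1,-1}^{D_k}, product topology; the two-point discrete space
   {1,-1} is represented by bool (true = 1, false = -1) *)
Definition Omega (X : topologicalType) (k : nat) : topologicalType :=
  {ptws Dk X k -> bool}.

Arguments Omega X k : clear implicits.

(* G-action on Omega_k: (g w)(beta) = w(g^{-1} beta), with ginv = g^{-1} *)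
Definition act_Omega (X : topologicalType) (k : nat) (ginv : X -> X)
  (w : Omega X k) : Omega X k := fun b => w (act_D ginv b).

Definition Dc (X : Type) (c : set (set X)) (D : set X) : set X :=
  \bigcap_(A in [set A | c A /\ A `&` D !=set0]) A.

(* s beta = t*_c(beta): the pieces (s beta)_1, ..., (s beta)_k are listed
   in increasing order for <_c *)
Definition increasing_for (X : Type) (k : nat) (c : set (set X))
  (B : 'I_k -> set X) (s : 'S_k) :=
  forall i j : 'I_k, (i < j)%N ->
    Dc c (perm_act s B i) `<=` Dc c (perm_act s B j).

Definition theta (X : topologicalType) (k : nat) (b : Dk X k)
  (c : set (set X)) : 'S_k :=
  odflt 1%g [pick s : 'S_k | `[< increasing_for c (val b) s >] ].

Definition phi (X : topologicalType) (k : nat) (T : 'S_k -> bool)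
  (c : ExpExp X) : Omega X k :=
  fun b => T (theta b c).

Definition zero_dim (X : topologicalType) :=
  forall (U : set X) (x : X), open U -> U x ->
    exists V : set X, [/\ clopen V, V x & V `<=` U].

Definition homeomorphic_to_space (X : topologicalType) (A : set X) :=
  exists f : X -> X, exists g : X -> X,
    [/\ continuous f, f @` [set: X] = A,
        {within A, continuous g} &
        (forall x, g (f x) = x) /\ (forall y, A y -> f (g y) = y)].

Definition h_homogeneous (X : topologicalType) :=
  forall A : set X, clopen A -> A !=set0 -> homeomorphic_to_space A.

Definition homeo_pair (X : topologicalType) (g ginv : X -> X) :=
  [/\ continuous g, continuous ginv, cancel g ginv & cancel ginv g].

(* Main.v *)
Require Import Defs.
From HB Require Import structures.
From mathcomp Require Import all_boot all_order all_algebra all_fingroup.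
From mathcomp Require Import all_classical all_reals all_analysis.
Local Open Scope classical_set_scope.
Set Implicit Arguments.
Unset Strict Implicit.

Definition ischain {X : Type} (c : set (set X)) :=
  forall A B, c A -> c B -> A `<=` B \/ B `<=` A.

Lemma Dc_meets (X : topologicalType) (c : set (set X)) (D : set X) :
  compact [set: X] -> (forall A, c A -> closed A) -> ischain c ->
  closed D -> D !=set0 -> Dc c D `&` D !=set0.
Proof.
move=> cpt cl ch clD [d Dd].
have [[A0 IA0]|noI] := pselect (exists A, c A /\ A `&` D !=set0); last first.
  exists d; split => // A [cA AD]; exfalso; apply: noI; by exists A; split.
pose F := filter_from [set A | c A /\ A `&` D !=set0] (fun A => A `&` D).
have FF : ProperFilter F.
  apply: filter_from_proper; last by move=> A [].
  apply: filter_from_filter; first by exists A0.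
  move=> A B [cA AD] [cB BD]; case: (ch A B cA cB) => sAB.
    by exists A => // x [Ax Dx]; split; split => //; apply: sAB.
  by exists B => // x [Bx Dx]; split; split => //; apply: sAB.
have [p [_ clp]] := cpt F FF (filterT).
have key : forall A, c A -> A `&` D !=set0 -> (A `&` D) p.
  move=> A cA AD; apply: (closedI (cl A cA) clD).
  move=> B nB; apply: clp nB; by exists A.
exists p; split; last by have [] := key A0 IA0.1 IA0.2.
by move=> A [cA AD]; have [] := key A cA AD.
Qed.

Definition wit {X : Type} (c : set (set X)) (D D' : set X) :=
  exists A, c A /\ A `&` D !=set0 /\ A `&` D' = set0.

Lemma wit_incl (X : Type) (c : set (set X)) D D' :
  ischain c -> wit c D D' -> Dc c D `<=` Dc c D'.
Proof.
move=> ch [A [cA [AD AD']]] x Hx A' [cA' A'D'].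
case: (ch A A' cA cA') => s.
  by apply: s; apply: Hx; split.
exfalso; case: A'D' => y [A'y D'y].
have : (A `&` D') y by split => //; apply: s.
by rewrite AD'.
Qed.

Lemma wit_nincl (X : topologicalType) (c : set (set X)) (D D' : set X) :
  compact [set: X] -> (forall A, c A -> closed A) -> ischain c ->
  closed D -> D !=set0 -> wit c D' D -> ~ (Dc c D `<=` Dc c D').
Proof.
move=> cpt cl ch clD D0 [A [cA [AD' AD]]] sub.
have [y [Dcy Dy]] := @Dc_meets _ c D cpt cl ch clD D0.
have : (A `&` D) y.
  split => //; apply: (sub y Dcy); by split.
by rewrite AD.
Qed.

Lemma mc_chain (X : topologicalType) (c : set (set X)) :
  maximal_chain c -> ischain c /\ (forall A, c A -> closed A).
Proof. by move=> [[sE ch] _]; split => // A /sE []. Qed.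

Lemma wit_total (X : topologicalType) (c : set (set X)) (D D' : set X) :
  compact [set: X] -> maximal_chain c ->
  closed D -> D !=set0 -> open D' -> D `&` D' = set0 ->
  wit c D D' \/ wit c D' D.
Proof.
move=> cpt mc clD D0 oD' DD'.
have [ch cl] := mc_chain mc.
have [w|nw] := pselect (wit c D' D); first by right.
left.
pose N := Dc c D `&` ~` D'.
have [y [Dcy Dy]] := @Dc_meets _ c D cpt cl ch clD D0.
have D'y : ~ D' y by move=> D'y; have : (D `&` D') y by []; rewrite DD'.
have Ny : N y by [].
have clN : closed N.
  apply: closedI; last exact: open_closedC.
  by apply: closed_bigI => A [cA _]; apply: cl.
have cmp : forall A, c A -> A `<=` N \/ N `<=` A.
  move=> A cA.
  have [AD|AD] := pselect (A `&` D !=set0).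
    by right => x [Dcx _]; apply: Dcx.
  left.
  have AD0 : A `&` D = set0.
    by apply/eqP/negPn/negP => /set0P; apply: AD.
  have AD'0 : A `&` D' = set0.
    apply/eqP/negPn/negP => /set0P H; apply: nw; exists A; split => //.
  move=> x Ax; split.
    move=> B [cB BD]; case: (ch A B cA cB) => s; first by apply: s.
    exfalso; case: BD => z [Bz Dz].
    have : (A `&` D) z by split => //; apply: s.
    by rewrite AD0.
  move=> D'x; have : (A `&` D') x by [].
  by rewrite AD'0.
have cN : c N.
  suff E : c `|` [set N] = c by rewrite -E; right.
  apply: mc.2; last by move=> A cA; left.
  split.
    move=> A [cA|->]; first by have [[sE _] _] := mc; apply: sE.
    by split => //; exists y.
  move=> A B [cA|->] [cB|->].
  - exact: ch.
  - by case: (cmp A cA) => s; [left|right].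
  - by case: (cmp B cB) => s; [right|left].
  - by left.
exists N; split => //; split; first by exists y.
apply/eqP/negPn/negP => /set0P [z [[_ nz] D'z]]; exact: nz.
Qed.

Lemma vopen (T:topologicalType) (U : set T) b : open U ->
  open (vietoris_subbase (U,b) : set (vietoris T)).
Proof.
move=> oU; exists [set vietoris_subbase (U,b)].
  by move=> _ ->; exact: finI_from1.
by rewrite bigcup_set1.
Qed.

Lemma near_wit (X : topologicalType) (D D' : set X) (c0 : ExpExp X) :
  open D -> closed D' ->
  \forall c \near c0, wit c0 D D' -> wit (c : set (set X)) D D'.
Proof.
move=> oD cD'.
have [[A [cA [AD AD']]]|nw] := pselect (wit c0 D D'); last first.
  apply: filterS (open_nbhs_nbhs (conj (@openT (ExpExp X)) (I : [set: ExpExp X] c0))).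
  by move=> c _ /nw.
pose W := [set A' : Exp X | A' `&` D !=set0 /\ A' `&` D' = set0].
have oW : open W.
  have -> : W = (vietoris_subbase (D,false) `&` vietoris_subbase (~` D', true)
                  : set (vietoris X)).
    apply/seteqP; split => A' /=.
      move=> [h1 h2]; split => // x A'x D'x.
      by have : (A' `&` D') x by []; rewrite h2.
    move=> [h1 h2]; split => //.
    by apply/eqP/negPn/negP => /set0P [x [/h2 ? ?]].
  apply: open_subspaceW; apply: openI; apply: vopen => //.
  by rewrite openC.
pose V := [set c : ExpExp X | c `&` W !=set0].
have oV : open V by exact: (vopen false oW).
have Vc0 : V c0 by exists A.
apply: filterS (open_nbhs_nbhs (conj oV Vc0)).
move=> c [A' [cA' [h1 h2]]] _; by exists A'.
Qed.

Lemma incl_stable (X : topologicalType) (c0 c : set (set X)) (D D' : set X) :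
  compact [set: X] -> maximal_chain c0 -> maximal_chain c ->
  clopen D -> D !=set0 -> clopen D' -> D' !=set0 -> D `&` D' = set0 ->
  (wit c0 D D' -> wit c D D') -> (wit c0 D' D -> wit c D' D) ->
  (Dc c D `<=` Dc c D') <-> (Dc c0 D `<=` Dc c0 D').
Proof.
move=> cpt mc0 mc [oD clD] D0 [oD' clD'] D'0 DD' h1 h2.
have [ch0 cl0] := mc_chain mc0; have [ch cl] := mc_chain mc.
case: (wit_total cpt mc0 clD D0 oD' DD') => w.
  by split => _; apply: wit_incl => //; apply: h1.
split => H; exfalso.
  by apply: (wit_nincl cpt cl ch clD D0 (h2 w)).
by apply: (wit_nincl cpt cl0 ch0 clD D0 w).
Qed.

Lemma piece (X : topologicalType) k (b : Dk X k) :
  ordered_partition (val b).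
Proof. by have := set_valP b. Qed.

Lemma theta_near (X : topologicalType) k (b : Dk X k) (c0 : ExpExp X) :
  compact [set: X] -> Phi X c0 ->
  \forall c \near within (Phi X) (nbhs c0), theta b c = theta b c0.
Proof.
move=> cpt Pc0.
have [Bp Bd Bc] := piece b.
set B := val b.
have H : \forall c \near nbhs c0, forall ij : 'I_k * 'I_k,
    wit c0 (B ij.1) (B ij.2) -> wit (c : set (set X)) (B ij.1) (B ij.2).
  apply: filter_forall => ij.
  by apply: near_wit; [case: (Bp ij.1) => [[]]|case: (Bp ij.2) => [[]]].
apply: filterS H => c Hc Pc.
rewrite /theta; congr (odflt _ _); apply: eq_pick => s /=.
suff E : increasing_for c B s <-> increasing_for c0 B s.
  by rewrite (propext E).
have R : forall i j, (Dc c (B i) `<=` Dc c (B j)) <-> (Dc c0 (B i) `<=` Dc c0 (B j)).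
  move=> i j; have [eij|nij] := eqVneq i j; first by rewrite eij; split => ?.
  apply: incl_stable => //; try by case: (Bp i). all: try by case: (Bp j).
  - exact: Bd.
  - exact: (Hc (i, j)).
  - exact: (Hc (j, i)).
by split => Hi i j ij; apply/R; apply: Hi.
Qed.

Lemma ptws_cvg (U : Type) (F : set_system {ptws U -> bool}) (f : {ptws U -> bool}) :
  Filter F -> (forall u, F [set g | g u = f u]) -> F --> f.
Proof.
move=> FF H.
apply/(@cvg_sup _ _ (fun i => Topological.class (initial_topology (fun f : (forall i, (fun _ => bool) i) => f i))) F f FF) => i.
move=> A /=; rewrite (@nbhsE (initial_topology (fun f : (forall i, (fun _ : U => bool) i) => f i))) => -[B [oB Bf] BA].
case: oB => C oC CB.
apply: filterS (H i) => g gi; apply: BA; rewrite -CB /=.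
rewrite gi. by rewrite -CB in Bf.
Qed.

Lemma phi_cont (X : topologicalType) (k : nat) (T : 'S_k -> bool) :
  compact [set: X] -> {within Phi X, continuous (phi T)}.
Proof.
move=> cpt; apply/subspace_continuousP => c0 Pc0.
apply: ptws_cvg => b.
apply: filterS (theta_near b cpt Pc0) => c /= E.
by rewrite /phi /from_subspace E.
Qed.

Lemma Dc_act (X : Type) (g ginv : X -> X) (c : set (set X)) (D : set X) x :
  cancel g ginv -> cancel ginv g ->
  Dc (act_chain g c) D x <-> Dc c (ginv @` D) (ginv x).
Proof.
move=> gK gKi; split.
- move=> H A [cA [z [Az [d Dd dz]]]].
  have : (g @` A) x.
    apply: H; split; first by exists A.
    exists (g z); split; first by exists z.
    by rewrite -dz gKi.
  by case=> a Aa <-; rewrite gK.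
- move=> H Y [[F cF <-] [y [[f Ff <-] Dgf]]].
  have : F (ginv x).
    apply: H; split => //; exists f; split => //.
    by exists (g f) => //; rewrite gK.
  by move=> Fx; exists (ginv x).
Qed.

Lemma incl_act (X : Type) (g ginv : X -> X) (c : set (set X)) (D D' : set X) :
  cancel g ginv -> cancel ginv g ->
  (Dc (act_chain g c) D `<=` Dc (act_chain g c) D') <->
  (Dc c (ginv @` D) `<=` Dc c (ginv @` D')).
Proof.
move=> gK gKi; split => H.
- move=> y Hy; have := H (g y); rewrite !Dc_act // gK; exact.
- by move=> x; rewrite !Dc_act //; apply: H.
Qed.

Lemma img_pre (X : Type) (g ginv : X -> X) (S : set X) :
  cancel g ginv -> cancel ginv g -> ginv @` S = g @^-1` S.
Proof.
move=> gK gKi; apply/seteqP; split => x /=.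
  by case=> y Sy <-; rewrite gKi.
by move=> Sgx; exists (g x) => //; rewrite gK.
Qed.

Lemma part_img (X : topologicalType) k (g ginv : X -> X) (B : 'I_k -> set X) :
  homeo_pair g ginv -> ordered_partition B ->
  ordered_partition (fun i => ginv @` B i).
Proof.
move=> [cg cgi gK gKi] [Bp Bd Bc]; split.
- move=> i; have [[oB clB] [x Bx]] := Bp i.
  rewrite (img_pre _ gK gKi); split; last by exists (ginv x); rewrite /= gKi.
  split; first by apply: (proj1 (continuousP g) cg).
  by apply: preimage_closed => // y _; apply: cg.
- move=> i j nij; rewrite !(img_pre _ gK gKi).
  apply/seteqP; split => x // [h1 h2].
  by have : (B i `&` B j) (g x) by []; rewrite Bd.
- apply/seteqP; split => x // _.
  have : [set: X] (g x) by [].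
  rewrite -Bc => -[i _ Bi]; exists i => //; by rewrite (img_pre _ gK gKi).
Qed.

Lemma phi_equiv (X : topologicalType) (k : nat) (T : 'S_k -> bool) :
  forall g ginv : X -> X, homeo_pair g ginv ->
     forall c : ExpExp X, Phi X c ->
       phi T (act_chain g c) = act_Omega ginv (phi T c).
Proof.
move=> g ginv hp c _; have [_ _ gK gKi] := hp.
apply: funext => b; rewrite /act_Omega /phi; congr (T _).
have E : val (act_D ginv b) = (fun i => ginv @` val b i).
  rewrite /act_D insubdK //; rewrite in_setE; exact: part_img hp (piece b).
rewrite /theta E; congr (odflt _ _); apply: eq_pick => s /=.
suff H : increasing_for (act_chain g c) (val b) s <->
         increasing_for c (fun i => ginv @` val b i) s by rewrite (propext H).
rewrite /increasing_for /perm_act.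
split => Hi i j ij.
  exact: (proj1 (@incl_act X g ginv c _ _ gK gKi) (Hi i j ij)).
  exact: (proj2 (@incl_act X g ginv c _ _ gK gKi) (Hi i j ij)).
Qed.

Theorem lemma4p8 (X : topologicalType) (k : nat) (T : 'S_k -> bool) :
  infinite_set [set: X] -> h_homogeneous X -> zero_dim X ->
  compact [set: X] -> hausdorff_space X -> (1 <= k)%N ->
  {within Phi X, continuous (phi T)} /\
  (forall g ginv : X -> X, homeo_pair g ginv ->
     forall c : ExpExp X, Phi X c ->
       phi T (act_chain g c) = act_Omega ginv (phi T c)).
Proof.
move=> _ _ _ cpt _ _; split; first exact: phi_cont.
exact: phi_equiv.
Qed.
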